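(* Let $F(x_1,x_2,\dots)$ be a solution of the dKP hierarchy, i.e. the quantities $H^i_m(x):=-\frac1m\frac{\partial^2F}{\partial x_i\partial x_m}$ ($i,m\ge1$) satisfy, for all $j,k,m\ge1$, $$H^{j+k}_m-H^j_{m+k}-H^k_{j+m}+\sum_{l=1}^{j-1}H^k_{j-l}H^l_m+\sum_{l=1}^{k-1}H^j_{k-l}H^l_m-\sum_{l=1}^{m-1}H^k_{m-l}H^j_l=0,$$ and put $u_k=H^1_k$ (with $u_k:=0$ for $k\le0$). For fixed $x$, let $A_x$ be the span of the formal Laurent series $p_0=1$, $p_i(z)=z^i+\sum_{k\ge1}H^i_k(x)z^{-k}$ ($i\ge1$), a commutative associative algebra under pointwise multiplication. Define the bilinear map $\psi:A_x\times A_x\to A_x$ by $$\psi(p_j,p_k)=\sum_{l\ge0}\Big(\frac{\partial u_{j-l}}{\partial x_k}+\frac{\partial u_{k-l}}{\partial x_j}\Big)p_l .$$ Then $\psi$ is a Hochschild 2-cocycle, i.e. $\alpha\psi(\beta,\gamma)-\psi(\alpha\beta,\gamma)+\psi(\alpha,\beta\gamma)-\gamma\psi(\alpha,\beta)=0$ for all $\alpha,\beta,\gamma\in A_x$, and a 2-coboundary, i.e. there is a linear map $g$ from $A_x$ into the $A_x$-module of formal Laurent series in $z$ such that $\psi(\alpha,\beta)=\alpha g(\beta)+\beta g(\alpha)-g(\alpha\beta)$ for all $\alpha,\beta\in A_x$.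
   Context: The displayed constraints are exactly the condition that $A_x$ is closed under multiplication, with $p_jp_k=\sum_l C^l_{jk}p_l$, $C^l_{jk}=\delta^l_{j+k}+H^k_{j-l}+H^j_{k-l}$ (with $H^a_b=0$ for $b\le0$). The dKP hierarchy is, by definition here, the system of these constraints for $H^i_m=-\frac1m\partial_{x_i}\partial_{x_m}F$ (dispersionless Hirota–Miwa equations). The 2-cocycle/2-coboundary notions are those of Hochschild (Harrison) cohomology of the commutative algebra $A_x$. *)

(* Defs.v *)
From HB Require Import structures.
From mathcomp Require Import all_boot all_order all_algebra.
From mathcomp Require Import all_classical all_reals all_analysis.
Set Implicit Arguments. Unset Strict Implicit. Unset Printing Implicit Defensive.
Import Order.TTheory GRing.Theory Num.Theory.
Local Open Scope ring_scope.

Section DKP.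
Variable R : realType.

(** ** Formal Laurent series in z with finitely many positive powers:
    coefficient of z^n is [lco f n]; vanishes above [ltop f]. *)
Record lser := LSer {
  ltop : int;
  lco : int -> R;
  lser_bnd : forall n : int, ltop < n -> lco n = 0 }.

Definition ls_eq (f g : lser) := forall n : int, lco f n = lco g n.

Definition ls_zero : lser := @LSer 0 (fun _ => 0) (fun _ _ => erefl).

Program Definition ls_add (f g : lser) : lser :=
  @LSer (Num.max (ltop f) (ltop g)) (fun n => lco f n + lco g n) _.
Next Obligation.
move=> f g n; rewrite gt_max => /andP[H1 H2].
by rewrite /= (lser_bnd H1) (lser_bnd H2) addr0.
Qed.

Program Definition ls_scale (c : R) (f : lser) : lser :=
  @LSer (ltop f) (fun n => c * lco f n) _.
Next Obligation. by move=> c f n H /=; rewrite (lser_bnd H) mulr0. Qed.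

Definition ls_opp (f : lser) : lser := ls_scale (-1) f.

(** Cauchy product: coefficient of z^n is the (finite) sum of
    f_a g_b over a + b = n, a <= ltop f, b <= ltop g. *)
Program Definition ls_mul (f g : lser) : lser :=
  @LSer (ltop f + ltop g)
    (fun n => if n <= ltop f + ltop g then
        \sum_(i < (absz (ltop f + ltop g - n)%R).+1)
           lco f (n - ltop g + i%:Z) * lco g (ltop g - i%:Z)
      else 0) _.
Next Obligation. by move=> f g n H /=; case: ifPn => //; rewrite leNgt H. Qed.

(** ** Infinitely many variables x_1, x_2, ...: a xvar is [x : nat -> R]
    with [x n] the coordinate x_{n+1}. *)
Definition xvar := nat -> R.
Definition shift (x : xvar) (n : nat) (t : R) : xvar :=
  fun m => if m == n then x m + t else x m.

(** [pd i f] = partial derivative of f with respect to x_i (i >= 1);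
    convention: [pd 0 f = 0] (there is no variable x_0). *)
Definition pd (i : nat) (f : xvar -> R) : xvar -> R :=
  fun x => if i is i'.+1 then derive1 (fun t : R => f (shift x i' t)) 0 else 0.

Definition iter_pd (s : seq nat) (f : xvar -> R) : xvar -> R := foldr pd f s.

Definition smooth_F (F : xvar -> R) :=
  (forall (s : seq nat) (i : nat) (x : xvar),
      derivable (fun t : R => iter_pd s F (shift x i t)) 0 1) /\
  (forall (s : seq nat) (i j : nat),
      pd i (pd j (iter_pd s F)) = pd j (pd i (iter_pd s F))).

Definition Hc (F : xvar -> R) (i m : nat) : xvar -> R :=
  fun x => - (m%:R)^-1 * pd i (pd m F) x.

Definition dKP (F : xvar -> R) :=
  forall (x : xvar) (j k m : nat), (0 < j)%N -> (0 < k)%N -> (0 < m)%N ->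
    Hc F (j + k) m x - Hc F j (m + k) x - Hc F k (j + m) x
    + \sum_(1 <= l < j) Hc F k (j - l) x * Hc F l m x
    + \sum_(1 <= l < k) Hc F j (k - l) x * Hc F l m x
    - \sum_(1 <= l < m) Hc F k (m - l) x * Hc F j l x = 0.

(** u_n = H^1_n for n >= 1, u_n = 0 for n <= 0 (nat subtraction truncates) *)
Definition u (F : xvar -> R) (n : nat) : xvar -> R :=
  if n is 0 then fun _ => 0 else Hc F 1 n.

(** elements of A_x are given by coordinate lists a : sum_i a`_i p_i,
    p_0 = 1, p_i = z^i + sum_{k>=1} H^i_k(x) z^{-k}. *)
Program Definition ser (F : xvar -> R) (x : xvar) (a : seq R) : lser :=
  @LSer (size a)%:Z
    (fun n => match n with
              | Posz m => a`_m
              | Negz m => \sum_(1 <= i < size a) a`_i * Hc F i m.+1 x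
              end) _.
Next Obligation.
move=> F x a [m|m] H //=.
by rewrite nth_default // -(@lez_nat) ltW.
Qed.

(** coordinates of psi(p_j, p_k) = sum_l (d u_{j-l}/dx_k + d u_{k-l}/dx_j) p_l
    (terms with l >= max j k vanish since u_{<=0} = 0) *)
Definition psi_basis (F : xvar -> R) (x : xvar) (j k : nat) : seq R :=
  mkseq (fun l => pd k (u F (j - l)) x + pd j (u F (k - l)) x) (maxn j k).

Definition psi (F : xvar -> R) (x : xvar) (a b : seq R) : seq R :=
  mkseq (fun l => \sum_(j < size a) \sum_(k < size b)
                    a`_j * b`_k * (psi_basis F x j k)`_l)
        (maxn (size a) (size b)).

Definition gext (G : nat -> lser) (a : seq R) : lser :=
  foldr (fun i acc => ls_add (ls_scale a`_i (G i)) acc) ls_zero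
        (iota 0 (size a)).

End DKP.

Notation "f =~ g" := (ls_eq f g) (at level 70, no associativity).

(* Main.v *)
Require Import Defs.
From HB Require Import structures.
From mathcomp Require Import all_boot all_order all_algebra.
From mathcomp Require Import all_classical all_reals all_analysis.
From mathcomp Require Import zify ring lra.
Set Implicit Arguments. Unset Strict Implicit. Unset Printing Implicit Defensive.
Import Order.TTheory GRing.Theory Num.Theory.
Local Open Scope ring_scope.
Section Win.
Variable R : realType.
Variable phi : int -> R.
Variables B A : int.
Hypothesis hB : forall z, z < B -> phi z = 0.
Hypothesis hA : forall z, A < z -> phi z = 0.
Hypothesis hBA : B <= A + 1.

Lemma win_left d : forall lo len, lo + d%:Z = B -> (d <= len)%N ->
  \sum_(i < len) phi (lo + i%:Z) = \sum_(i < len - d) phi (B + i%:Z).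
Proof.
elim: d => [|d IH] lo len e hd.
  by rewrite subn0 -e addr0.
case: len hd => // len hd.
rewrite big_ord_recl /= hB; last by lia.
rewrite add0r subSS -(IH (lo + 1)) //; last by lia.
by apply: eq_bigr => i _; congr phi; rewrite /bump /=; lia.
Qed.

Let len0 := absz (A + 1 - B)%R.
Let hl : len0%:Z = A + 1 - B.
Proof. by rewrite /len0 gez0_abs; lia. Qed.

Lemma win_right e :
  \sum_(i < len0 + e) phi (B + i%:Z) = \sum_(i < len0) phi (B + i%:Z).
Proof.
elim: e => [|e IH]; first by rewrite addn0.
rewrite addnS big_ord_recr /= hA ?addr0 //; lia.
Qed.

Lemma win_cover lo len : lo <= B -> A < lo + len%:Z ->
  \sum_(i < len) phi (lo + i%:Z) = \sum_(i < len0) phi (B + i%:Z).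
Proof.
move=> h1 h2.
have hd : (absz (B - lo)%R)%:Z = B - lo by rewrite gez0_abs; lia.
rewrite (@win_left (absz (B - lo)%R) lo len); first last.
- by rewrite -lez_nat hd; lia.
- by rewrite hd; lia.
have -> : (len - absz (B - lo)%R = len0 + (len - absz (B - lo)%R - len0))%N.
  have : (len0 <= len - absz (B - lo)%R)%N.
    by rewrite -lez_nat; move: hd hl h2; case: (absz (B - lo)%R) => n; lia.
  lia.
by rewrite win_right.
Qed.

End Win.

Section Mul.
Variable R : realType.

Lemma phi_zero_sum (phi : int -> R) lo len : (forall z, phi z = 0) ->
  \sum_(i < len) phi (lo + i%:Z) = 0.
Proof. by move=> h; apply: big1 => i _; apply: h. Qed.

Lemma mul_window (f g : lser R) (T1 T2 t lo : int) (len : nat) :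
 (forall n, T1 < n -> lco f n = 0) -> (forall n, T2 < n -> lco g n = 0) ->
 lo <= t - T2 -> T1 < lo + len%:Z ->
 lco (ls_mul f g) t = \sum_(i < len) lco f (lo + i%:Z) * lco g (t - (lo + i%:Z)).
Proof.
move=> hf hg h1 h2.
pose phi := fun z => lco f z * lco g (t - z).
have hz : forall z, (T1 < z \/ ltop f < z \/ T2 < t - z \/ ltop g < t - z) ->
   phi z = 0.
  move=> z [h|[h|[h|h]]]; rewrite /phi.
  - by rewrite hf ?mul0r.
  - by rewrite lser_bnd ?mul0r.
  - by rewrite hg ?mulr0.
  - by rewrite (lser_bnd h) ?mulr0.
have [A [hA1 [hA2 hA3]]] : exists A, A <= T1 /\ A <= ltop f /\
    (A = T1 \/ A = ltop f).
  case: (lerP T1 (ltop f)) => h; [exists T1 | exists (ltop f)]; lia.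
have [B [hB1 [hB2 hB3]]] : exists B, t - T2 <= B /\ t - ltop g <= B /\
    (B = t - T2 \/ B = t - ltop g).
  case: (lerP (t - T2) (t - ltop g)) => h; [exists (t - ltop g) | exists (t - T2)]; lia.
have hzA : forall z, A < z -> phi z = 0.
  by move=> z h; apply: hz; lia.
have hzB : forall z, z < B -> phi z = 0.
  by move=> z h; apply: hz; lia.
have E : forall lo' n, \sum_(i < n) lco f (lo' + i%:Z) * lco g (t - (lo' + i%:Z))
   = \sum_(i < n) phi (lo' + i%:Z) by [].
rewrite E /ls_mul /=.
case: ifP => ht; last first.
  rewrite phi_zero_sum // => z.
  by case: (lerP z (ltop f)) => h; apply: hz; lia.
rewrite (_ : \sum_(i < _) _ = \sum_(i < (absz (ltop f + ltop g - t)%R).+1) phi (t - ltop g + i%:Z));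
  last by apply: eq_bigr => i _; rewrite /phi; congr (_ * lco g _); lia.
case: (lerP B (A + 1)) => hBA; last first.
  have h0 : forall z, phi z = 0.
    move=> z; case: (lerP z A) => h; [apply: hzB|apply: hzA]; lia.
  by rewrite !phi_zero_sum.
rewrite (win_cover hzB hzA hBA (lo := lo)) //; try lia.
rewrite (win_cover hzB hzA hBA) //; try lia.
all: try (rewrite gez0_abs; lia).
Qed.
End Mul.

Section Ring.
Variable R : realType.
Implicit Types f g h : lser R.

Lemma bnd f : forall n, ltop f < n -> lco f n = 0.
Proof. by move=> n h; apply: lser_bnd. Qed.

Lemma L_mul f g (T1 T2 : int) (K : nat) :
 (forall n, T1 < n -> lco f n = 0) -> (forall n, T2 < n -> lco g n = 0) ->
 lco (ls_mul f g) (T1 + T2 - K%:Z) =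
   \sum_(i < K.+1) lco f (T1 - i%:Z) * lco g (T2 - (K - i)%N%:Z).
Proof.
move=> hf hg.
rewrite (@mul_window _ f g T1 T2 _ (T1 - K%:Z) K.+1) //; try lia.
rewrite (reindex_inj rev_ord_inj); apply: eq_bigr => i _ /=.
have hi := ltn_ord i.
congr (lco f _ * lco g _); lia.
Qed.

Lemma bndM f g : forall n, ltop f + ltop g < n -> lco (ls_mul f g) n = 0.
Proof. move=> n h; apply: lser_bnd; exact: h. Qed.

Lemma win_ok (T1 lo : int) : T1 < lo + (absz (T1 - lo)%R).+1%:Z.
Proof. have := lez_abs (T1 - lo); lia. Qed.

Lemma ls_eq_refl f : f =~ f. Proof. by []. Qed.
Lemma ls_eq_sym f g : f =~ g -> g =~ f. Proof. by move=> h n; rewrite h. Qed.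
Lemma ls_eq_trans f g h : f =~ g -> g =~ h -> f =~ h.
Proof. by move=> h1 h2 n; rewrite h1 h2. Qed.

Lemma co_add f g n : lco (ls_add f g) n = lco f n + lco g n. Proof. by []. Qed.
Lemma co_opp f n : lco (ls_opp f) n = - lco f n.
Proof. by rewrite /= mulN1r. Qed.
Lemma co_scale c f n : lco (ls_scale c f) n = c * lco f n. Proof. by []. Qed.

Lemma mul_congr f f' g g' : f =~ f' -> g =~ g' -> ls_mul f g =~ ls_mul f' g'.
Proof.
move=> ef eg t.
have bf' : forall n, ltop f < n -> lco f' n = 0 by move=> n h; rewrite -ef bnd.
have bg' : forall n, ltop g < n -> lco g' n = 0 by move=> n h; rewrite -eg bnd.
rewrite (@mul_window _ f g (ltop f) (ltop g) t (t - ltop g) (absz (ltop f - (t - ltop g))%R).+1);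
  try exact: bnd; try exact: bndM; try exact: win_ok; try lia.
rewrite (@mul_window _ f' g' (ltop f) (ltop g) t (t - ltop g) (absz (ltop f - (t - ltop g))%R).+1);
  try exact: bnd; try exact: bndM; try exact: win_ok; try lia; try done.
by apply: eq_bigr => i _; rewrite ef eg.
Qed.

Lemma ls_mulC f g : ls_mul f g =~ ls_mul g f.
Proof.
move=> t.
set lo := t - ltop g; set len := (absz (ltop f - lo)%R).+1.
have hw := win_ok (ltop f) lo.
rewrite (@mul_window _ f g (ltop f) (ltop g) t lo len); try exact: bnd; try exact: bndM; try lia.
rewrite (@mul_window _ g f (ltop g) (ltop f) t (t - lo - len%:Z + 1) len);
  try exact: bnd; try exact: bndM; try lia.
rewrite (reindex_inj rev_ord_inj); apply: eq_bigr => i _ /=.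
have hi := ltn_ord i.
rewrite mulrC; congr (_ * _); congr (lco _ _); rewrite /len in hi *; lia.
Qed.

Lemma mul_addr f g h : ls_mul f (ls_add g h) =~ ls_add (ls_mul f g) (ls_mul f h).
Proof.
move=> t.
have [M hM1 hM2] : exists2 M, ltop g <= M & ltop h <= M.
  by case: (lerP (ltop g) (ltop h)) => hh; [exists (ltop h)|exists (ltop g)]; lia.
set lo := t - M; set len := (absz (ltop f - lo)%R).+1.
have hw := win_ok (ltop f) lo.
have bg : forall n, M < n -> lco g n = 0 by move=> n hn; apply: bnd; lia.
have bh : forall n, M < n -> lco h n = 0 by move=> n hn; apply: bnd; lia.
rewrite co_add (@mul_window _ f _ (ltop f) M t lo len); try exact: bnd; try exact: bndM; try lia.
  rewrite (@mul_window _ f g (ltop f) M t lo len); try exact: bnd; try exact: bndM; try lia.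
  rewrite (@mul_window _ f h (ltop f) M t lo len); try exact: bnd; try exact: bndM; try lia.
  by rewrite -big_split; apply: eq_bigr => i _; rewrite co_add mulrDr.
all: first [exact: bg | exact: bh | by move=> n hn /=; rewrite bg ?bh ?addr0].
Qed.

Lemma mul_oppr f g : ls_mul f (ls_opp g) =~ ls_opp (ls_mul f g).
Proof.
move=> t.
set lo := t - ltop g; set len := (absz (ltop f - lo)%R).+1.
have hw := win_ok (ltop f) lo.
rewrite co_opp (@mul_window _ f _ (ltop f) (ltop g) t lo len); try exact: bnd; try exact: bndM; try lia.
  rewrite (@mul_window _ f g (ltop f) (ltop g) t lo len); try exact: bnd; try exact: bndM; try lia.
  by rewrite -sumrN; apply: eq_bigr => i _; rewrite co_opp mulrN.
by move=> n hn; rewrite co_opp bnd ?oppr0.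
Qed.

Lemma ls_mulA f g h : ls_mul (ls_mul f g) h =~ ls_mul f (ls_mul g h).
Proof.
move=> t.
set lo := t - ltop h.
set lo' := lo - ltop g.
set L' := (absz (ltop f - lo')%R).+1.
set L := (L' + absz (ltop f + ltop g - lo)%R).+1.
have hw' := win_ok (ltop f) lo'.
have hw := win_ok (ltop f + ltop g) lo.
rewrite (@mul_window _ _ h (ltop f + ltop g) (ltop h) t lo L); try exact: bnd; try exact: bndM; try lia.
rewrite (@mul_window _ f _ (ltop f) (ltop g + ltop h) t lo' L'); try exact: bnd; try exact: bndM; try lia.
rewrite (eq_bigr (fun i : 'I_L => \sum_(j < L') lco f (lo' + j%:Z) *
   lco g (lo + i%:Z - (lo' + j%:Z)) * lco h (t - (lo + i%:Z)))); last first.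
  move=> i _; rewrite (@mul_window _ f g (ltop f) (ltop g) _ lo' L');
    try exact: bnd; try exact: bndM; try lia.
  by rewrite mulr_suml.
rewrite exchange_big; apply: eq_bigr => j _.
have hj := ltn_ord j.
rewrite (@mul_window _ g h (ltop g) (ltop h) _ (lo - lo' - j%:Z) L);
    try exact: bnd; try exact: bndM; try (rewrite /L /lo' /lo in hj *; lia).
rewrite mulr_sumr; apply: eq_bigr => i _.
rewrite mulrA; congr (_ * lco g _ * lco h _); lia.
Qed.
End Ring.
Section Sums.
Variable R : realType.
Implicit Types f F : nat -> R.

Lemma sum_delta (n m : nat) F :
  \sum_(j < n) F j * (j == m :> nat)%:R = if (m < n)%N then F m else 0.
Proof.
elim: n => [|n IH]; first by rewrite big_ord0.
rewrite big_ord_recr /= IH.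
case: (ltngtP m n) => h /=; case: ifP => hh;
  rewrite ?mulr0 ?mulr1 ?addr0 ?add0r //; try lia.
by rewrite h.
Qed.

Lemma sum_delta2 (K c : nat) F :
  \sum_(i < K.+1) F i * ((K - i)%N == c)%:R = if (c <= K)%N then F (K - c)%N else 0.
Proof.
rewrite (reindex_inj rev_ord_inj) /=.
rewrite (eq_bigr (fun i : 'I_K.+1 => F (K - i)%N * (i == c :> nat)%:R)).
  by rewrite (sum_delta K.+1 c (fun i => F (K - i)%N)) ltnS.
move=> i _; have hi := ltn_ord i; rewrite subSS (_ : K - (K - i) = i)%N //; lia.
Qed.

Lemma sum_cut_nat (a j N : nat) f : (j <= N)%N -> (forall l, (j <= l)%N -> f l = 0) ->
  \sum_(a <= l < N) f l = \sum_(a <= l < j) f l.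
Proof.
move=> hjN hz.
case: (leqP a j) => haj.
  rewrite (@big_cat_nat _ _ _ j a N) //=.
  rewrite [X in _ + X = _]big1_seq ?addr0 // => i /andP[_].
  by rewrite mem_index_iota => /andP[hi _]; exact: hz.
rewrite [RHS]big_geq; last by lia.
rewrite big1_seq // => i /andP[_].
by rewrite mem_index_iota => /andP[hi _]; apply: hz; lia.
Qed.

Lemma sum_cut (j N : nat) f : (j <= N)%N -> (forall l, (j <= l)%N -> f l = 0) ->
  \sum_(l < N) f l = \sum_(l < j) f l.
Proof.
move=> h1 h2; rewrite -!(big_mkord xpredT) (@sum_cut_nat 0 j N) //.
Qed.

Lemma sum_from1 (j : nat) f : f 0%N = 0 ->
  \sum_(l < j) f l = \sum_(1 <= l < j) f l.
Proof.
move=> h0; case: j => [|j]; first by rewrite big_ord0 big_geq.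
by rewrite -(big_mkord xpredT) big_ltn // h0 add0r.
Qed.

End Sums.
Section DKPalg.
Variable R : realType.
Variable F : xvar R -> R.

Lemma eqb_iff (b1 b2 : bool) : (b1 -> b2) -> (b2 -> b1) -> b1 = b2.
Proof. by case: b1; case: b2 => // h1 h2; [have := h1 isT | have := h2 isT]. Qed.

Lemma Hc0 i y : Hc F i 0 y = 0.
Proof. by rewrite /Hc invr0 oppr0 mul0r. Qed.
Lemma H0m m y : Hc F 0 m y = 0.
Proof. by rewrite /Hc /pd mulr0. Qed.

Definition cb (y : xvar R) (j : nat) (t : int) : R :=
  (t == j%:Z)%:R + (match t with Negz m => Hc F j m.+1 y | Posz _ => 0 end).

Lemma ser_co y a t : lco (ser F y a) t = \sum_(j < size a) a`_j * cb y j t.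
Proof.
case: t => m /=.
  rewrite (eq_bigr (fun j : 'I_(size a) => a`_j * (j == m :> nat)%:R)); last first.
    by move=> j _; rewrite /cb addr0 eqz_nat eq_sym.
  rewrite sum_delta; case: ltnP => h //.
  by rewrite nth_default.
rewrite (eq_bigr (fun j : 'I_(size a) => a`_j * Hc F j m.+1 y)); last first.
  by move=> j _; rewrite /cb add0r.
rewrite (@sum_from1 _ _ (fun j => a`_j * Hc F j m.+1 y)) //.
by rewrite H0m mulr0.
Qed.

Definition cbn y (j T i : nat) : R := (i == T - j)%N%:R + Hc F j (i - T) y.

Lemma cb_cbn y j T i : (j <= T)%N -> cb y j (T%:Z - i%:Z) = cbn y j T i.
Proof.
move=> hj; rewrite /cb /cbn.
case E: (T%:Z - i%:Z) => [m|m].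
  rewrite (_ : (i - T = 0)%N); last by lia.
  rewrite Hc0 !addr0; congr (_%:R).
  by apply/eqP; case: eqP; case: eqP => //; lia.
rewrite (_ : (Negz m == j%:Z) = false) //= add0r.
rewrite (_ : (i == T - j)%N = false) ?add0r; last by apply/eqP; rewrite NegzE in E; lia.
by congr (Hc F j _ y); rewrite NegzE in E; lia.
Qed.

Definition Cc y (j k l : nat) : R :=
  (l == j + k)%N%:R + Hc F k (j - l) y + Hc F j (k - l) y.


Lemma dKP_all (hd : dKP F) y j k m : (0 < m)%N ->
    Hc F (j + k) m y - Hc F j (m + k) y - Hc F k (j + m) y
    + \sum_(1 <= l < j) Hc F k (j - l) y * Hc F l m y
    + \sum_(1 <= l < k) Hc F j (k - l) y * Hc F l m y
    - \sum_(1 <= l < m) Hc F k (m - l) y * Hc F j l y = 0.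
Proof.
move=> hm.
have z1 : forall a b, \sum_(a <= l < b) Hc F 0 (b - l) y * Hc F l m y = 0.
  by move=> a b; apply: big1 => l _; rewrite H0m mul0r.
have z2 : forall a b c, \sum_(a <= l < b) Hc F c (b - l) y * Hc F 0 l y = 0.
  by move=> a b c; apply: big1 => l _; rewrite H0m mulr0.
have z3 : forall a b c, \sum_(a <= l < b) Hc F 0 (b - l) y * Hc F c l y = 0.
  by move=> a b c; apply: big1 => l _; rewrite H0m mul0r.
case: j => [|j].
  rewrite add0n !H0m z1 z2 big_geq //; lra.
case: k => [|k].
  rewrite !addn0 !H0m z1 z3 [X in _ + X - _]big_geq //; lra.
by apply: hd.
Qed.

Lemma basis_prod (hd : dKP F) y j k T1 T2 K : (j <= T1)%N -> (k <= T2)%N ->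
  \sum_(i < K.+1) cbn y j T1 i * cbn y k T2 (K - i)%N =
  \sum_(l < (T1 + T2).+1) Cc y j k l * cbn y l (T1 + T2) K.
Proof.
move=> hj hk.
set T := (T1 + T2)%N.
have S1 : \sum_(i < K.+1) ((K - i)%N == T2 - k)%N%:R * (i == (T1 - j)%N :> nat)%:R =
   if (T1 - j < K.+1)%N then ((K - (T1 - j))%N == T2 - k)%N%:R else 0 :> R.
  by rewrite (sum_delta K.+1 (T1 - j) (fun i => ((K - i)%N == T2 - k)%N%:R)).
have S2 : \sum_(i < K.+1) Hc F k (K - i - T2) y * (i == (T1 - j)%N :> nat)%:R =
   if (T1 - j < K.+1)%N then Hc F k (K - (T1 - j) - T2) y else 0.
  by rewrite (sum_delta K.+1 (T1 - j) (fun i => Hc F k (K - i - T2) y)).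
have S3 : \sum_(i < K.+1) Hc F j (i - T1) y * ((K - i)%N == T2 - k)%N%:R =
   if (T2 - k <= K)%N then Hc F j (K - (T2 - k) - T1) y else 0.
  by rewrite (sum_delta2 K (T2 - k) (fun i => Hc F j (i - T1) y)).
transitivity (
  \sum_(i < K.+1) ((K - i)%N == T2 - k)%N%:R * (i == (T1 - j)%N :> nat)%:R +
  \sum_(i < K.+1) Hc F k (K - i - T2) y * (i == (T1 - j)%N :> nat)%:R +
  \sum_(i < K.+1) Hc F j (i - T1) y * ((K - i)%N == T2 - k)%N%:R +
  \sum_(i < K.+1) Hc F j (i - T1) y * Hc F k (K - i - T2) y).
  rewrite -!big_split; apply: eq_bigr => i _ /=; rewrite /cbn; ring.
rewrite S1 S2 S3.
case: (leqP K T) => hKT.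
  rewrite [X in _ + X = _]big1; last first.
    move=> i _; case: (leqP i T1) => hi.
      by rewrite (_ : (i - T1 = 0)%N) ?Hc0 ?mul0r //; lia.
    by rewrite (_ : (K - i - T2 = 0)%N) ?Hc0 ?mulr0 //; lia.
  rewrite (eq_bigr (fun l : 'I_T.+1 => Cc y j k l * (l == (T - K)%N :> nat)%:R));
    last first.
    move=> l _; have hl := ltn_ord l; rewrite /cbn (_ : (K - T = 0)%N) ?Hc0 ?addr0;
      last by lia.
    by rewrite (@eqb_iff (K == (T - l)%N) (l == (T - K)%N :> nat)) // => /eqP h; apply/eqP; lia.
  rewrite [RHS]sum_delta [RHS]ifT; last by lia.
  rewrite /Cc addr0.
  have e1 : (if (T1 - j < K.+1)%N then ((K - (T1 - j))%N == T2 - k)%N%:R else 0)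
       = ((T - K)%N == j + k)%N%:R :> R.
    case: ifP => h.
      by rewrite (@eqb_iff ((K - (T1 - j))%N == (T2 - k)%N) ((T - K)%N == (j + k)%N)) // => /eqP h'; apply/eqP; lia.
    by rewrite (_ : (T - K == j + k)%N = false) //; apply/negbTE/eqP; lia.
  have e2 : (if (T1 - j < K.+1)%N then Hc F k (K - (T1 - j) - T2) y else 0)
       = Hc F k (j - (T - K)) y.
    case: ifP => h; first by congr (Hc F k _ y); lia.
    by rewrite (_ : (j - (T - K) = 0)%N) ?Hc0 //; lia.
  have e3 : (if (T2 - k <= K)%N then Hc F j (K - (T2 - k) - T1) y else 0)
       = Hc F j (k - (T - K)) y.
    case: ifP => h; first by congr (Hc F j _ y); lia.
    by rewrite (_ : (k - (T - K) = 0)%N) ?Hc0 //; lia.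
  by rewrite e1 e2 e3.
set n := (K - T)%N.
have hn : (0 < n)%N by rewrite /n; lia.
rewrite (_ : (T1 - j < K.+1)%N = true); last by lia.
rewrite (_ : (T2 - k <= K)%N = true); last by lia.
rewrite (_ : ((K - (T1 - j))%N == (T2 - k)%N) = false); last by apply/negbTE/eqP; lia.
have -> : (false%:R : R) = 0 by [].
rewrite (_ : (K - (T1 - j) - T2 = j + n)%N); last by rewrite /n; lia.
rewrite (_ : (K - (T2 - k) - T1 = n + k)%N); last by rewrite /n; lia.
have S4 : \sum_(i < K.+1) Hc F j (i - T1) y * Hc F k (K - i - T2) y =
    \sum_(1 <= l < n) Hc F k (n - l) y * Hc F j l y.
  rewrite -(big_mkord xpredT (fun i => Hc F j (i - T1) y * Hc F k (K - i - T2) y)).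
  rewrite (@big_cat_nat _ _ _ T1.+1 0 K.+1) //=; last by lia.
  rewrite [X in X + _ = _]big1_seq ?add0r; last first.
    move=> i /andP[_]; rewrite mem_index_iota => /andP[_ hi].
    by rewrite (_ : (i - T1 = 0)%N) ?Hc0 ?mul0r //; lia.
  have -> : \sum_(T1.+1 <= i < K.+1) (Hc F j (i - T1) y * Hc F k (K - i - T2) y) =
     \sum_(1 + T1 <= i < K.+1) (Hc F j (i - T1) y * Hc F k (K - i - T2) y) by [].
  rewrite big_addn.
  rewrite (@sum_cut_nat _ 1 n (K.+1 - T1)); first last.
  - move=> l hl; rewrite (_ : (K - (l + T1) - T2 = 0)%N) ?Hc0 ?mulr0 //.
    by move: hl; rewrite /n; lia.
  - by rewrite /n; lia.
  apply: eq_big_nat => l /andP[h1 h2]; rewrite mulrC.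
  by congr (Hc F k _ y * Hc F j _ y); move: h2; rewrite /n; lia.
rewrite S4.
rewrite (eq_bigr (fun l : 'I_T.+1 => Hc F l n y * (l == (j + k)%N :> nat)%:R +
   Hc F k (j - l) y * Hc F l n y + Hc F j (k - l) y * Hc F l n y)); last first.
  move=> l _; have hl := ltn_ord l.
  rewrite /cbn (_ : (K == T - l)%N = false) ?add0r; last by apply/negbTE/eqP; lia.
  by rewrite /Cc; ring.
rewrite !big_split /= (sum_delta _ _ (fun l => Hc F l n y)) ifT; last by lia.
rewrite (@sum_cut _ j T.+1 (fun l => Hc F k (j - l) y * Hc F l n y)); first last.
- by move=> l hl; rewrite (_ : (j - l = 0)%N) ?Hc0 ?mul0r //; lia.
- by lia.
rewrite (@sum_cut _ k T.+1 (fun l => Hc F j (k - l) y * Hc F l n y)); first last.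
- by move=> l hl; rewrite (_ : (k - l = 0)%N) ?Hc0 ?mul0r //; lia.
- by lia.
rewrite (@sum_from1 _ j (fun l => Hc F k (j - l) y * Hc F l n y)); last by rewrite H0m mulr0.
rewrite (@sum_from1 _ k (fun l => Hc F j (k - l) y * Hc F l n y)); last by rewrite H0m mulr0.
have E := dKP_all hd y j k hn.
lra.
Qed.
End DKPalg.
Section Closure.
Variable R : realType.
Variable F : xvar R -> R.
Hypothesis hd : dKP F.

Definition ccs y (a b : seq R) (l : nat) : R :=
  \sum_(j < size a) \sum_(k < size b) a`_j * b`_k * Cc F y j k l.
Definition cc y (a b : seq R) : seq R := mkseq (ccs y a b) (size a + size b).+1.

Lemma ser_con y a i T : (size a <= T.+1)%N ->
  lco (ser F y a) (T%:Z - i%:Z) = \sum_(j < size a) a`_j * cbn F y j T i.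
Proof.
move=> h; rewrite ser_co; apply: eq_bigr => j _; rewrite cb_cbn //.
by have := ltn_ord j; lia.
Qed.

Lemma closure_core y a b K :
  \sum_(i < K.+1) lco (ser F y a) ((size a)%:Z - i%:Z) *
                  lco (ser F y b) ((size b)%:Z - (K - i)%N%:Z) =
  \sum_(l < (size a + size b).+1) ccs y a b l * cbn F y l (size a + size b) K.
Proof.
transitivity (\sum_(j < size a) \sum_(k < size b) a`_j * b`_k *
   \sum_(i < K.+1) cbn F y j (size a) i * cbn F y k (size b) (K - i)%N).
  rewrite (eq_bigr (fun i : 'I_K.+1 => \sum_(j < size a) \sum_(k < size b)
      a`_j * b`_k * (cbn F y j (size a) i * cbn F y k (size b) (K - i)%N))); last first.
    move=> i _; rewrite !ser_con // mulr_suml; apply: eq_bigr => j _.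
    by rewrite mulr_sumr; apply: eq_bigr => k _; ring.
  rewrite [LHS]exchange_big; apply: eq_bigr => j _.
  rewrite [LHS]exchange_big; apply: eq_bigr => k _.
  by rewrite mulr_sumr.
transitivity (\sum_(j < size a) \sum_(k < size b) a`_j * b`_k *
   \sum_(l < (size a + size b).+1) Cc F y j k l * cbn F y l (size a + size b) K).
  apply: eq_bigr => j _; apply: eq_bigr => k _.
  rewrite basis_prod //; first by have := ltn_ord j; lia.
  by have := ltn_ord k; lia.
rewrite /ccs.
rewrite (eq_bigr (fun l : 'I_(size a + size b).+1 => \sum_(j < size a) \sum_(k < size b)
      a`_j * b`_k * (Cc F y j k l * cbn F y l (size a + size b) K))); last first.
  move=> l _; rewrite mulr_suml; apply: eq_bigr => j _.
  by rewrite mulr_suml; apply: eq_bigr => k _; ring.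
rewrite [RHS]exchange_big; apply: eq_bigr => j _.
rewrite [RHS]exchange_big; apply: eq_bigr => k _.
by rewrite mulr_sumr.
Qed.


Lemma bndS y a : forall n, (size a)%:Z < n -> lco (ser F y a) n = 0.
Proof. by move=> n h; apply: lser_bnd. Qed.

Lemma ls_closure y a b : ls_mul (ser F y a) (ser F y b) =~ ser F y (cc y a b).
Proof.
move=> t.
case: (lerP t (size a + size b)%N%:Z) => ht.
  have eK : t = (size a)%:Z + (size b)%:Z - (absz ((size a + size b)%N%:Z - t)%R)%:Z.
    by rewrite gez0_abs; lia.
  rewrite eK L_mul; try exact: bndS.
  rewrite closure_core.
  rewrite (_ : (size a)%:Z + (size b)%:Z = (size a + size b)%N%:Z) //.
  rewrite ser_con; last by rewrite size_mkseq.
  rewrite size_mkseq; apply: eq_bigr => l _.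
  by rewrite nth_mkseq.
rewrite bndM; last by rewrite /=; lia.
case: t ht => m ht; last by rewrite NegzE in ht; lia.
rewrite /= nth_default // size_mkseq; lia.
Qed.

End Closure.
Section Dv.
Variable R : realType.

Definition dv (f : R -> R) (df : R) := is_derive (0:R) (1:R) f df.

Lemma dv_val f df : dv f df -> derive1 f 0 = df.
Proof. move=> h; have h' : is_derive (0:R) (1:R) f df := h; by rewrite derive1E derive_val. Qed.

Lemma dv_ext f a b : dv f a -> a = b -> dv f b.
Proof. by move=> h <-. Qed.

Lemma dv_fext f g a : (forall s, f s = g s) -> dv f a -> dv g a.
Proof. by move=> h; rewrite (_ : g = f) //; apply: funext => s; rewrite h. Qed.

Lemma dv_uniq f a b : dv f a -> dv f b -> a = b.
Proof. by move=> h1 h2; rewrite -(dv_val h1) -(dv_val h2). Qed.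

Lemma dv_cst c : dv (fun _ => c) 0.
Proof. exact: is_derive_cst. Qed.

Lemma dv_add f g a b : dv f a -> dv g b -> dv (fun s => f s + g s) (a + b).
Proof. by move=> h1 h2; apply: is_deriveD. Qed.

Lemma dv_mul f g a b : dv f a -> dv g b -> dv (fun s => f s * g s) (f 0 * b + g 0 * a).
Proof. by move=> h1 h2; have := is_deriveM h1 h2. Qed.

Lemma dv_scal c f a : dv f a -> dv (fun s => c * f s) (c * a).
Proof.
move=> h; apply: dv_ext; first exact: (dv_mul (dv_cst c) h).
by rewrite mulr0 addr0.
Qed.

Lemma dv_sum n (f : 'I_n -> R -> R) (a : 'I_n -> R) :
  (forall i, dv (f i) (a i)) -> dv (fun s => \sum_(i < n) f i s) (\sum_(i < n) a i).
Proof.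
move=> h; have := is_derive_sum h.
by rewrite (_ : \sum_(i < n) f i = fun s => \sum_(i < n) f i s) //; apply: funext => s; rewrite fct_sumE.
Qed.

End Dv.
Section PD.
Variable R : realType.
Variable F : xvar R -> R.
Hypothesis hs : smooth_F F.

Lemma shift0 (x : xvar R) : Defs.shift x 0 0 = x.
Proof. by apply: funext => m; rewrite /Defs.shift; case: eqP => // ->; rewrite addr0. Qed.

Lemma pd_cst i (c : R) (x : xvar R) : pd i (fun _ => c) x = 0.
Proof.
case: i => [|i] //=.
by apply: (dv_val (dv_cst c)).
Qed.

Lemma pd_dv (h : xvar R -> R) (x : xvar R) (i : nat) :
  derivable (fun t : R => h (Defs.shift x i t)) 0 1 ->
  dv (fun s => h (Defs.shift x i s)) (pd i.+1 h x).
Proof. by move=> d; rewrite /pd derive1E; apply: derivableP. Qed.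

Lemma iter_dv (s : seq nat) (x : xvar R) i :
  dv (fun t => iter_pd s F (Defs.shift x i t)) (pd i.+1 (iter_pd s F) x).
Proof. by apply: pd_dv; apply: hs.1. Qed.

Lemma pd_scal i (c : R) (g : xvar R -> R) (x : xvar R) :
  (forall i', derivable (fun t : R => g (Defs.shift x i' t)) 0 1) ->
  pd i (fun z => c * g z) x = c * pd i g x.
Proof.
case: i => [|i] h; first by rewrite /= mulr0.
apply: dv_val; apply: dv_scal; exact: pd_dv.
Qed.

Lemma Hc_fun0 k : Hc F k 0 = fun _ => 0.
Proof. by apply: funext => y; rewrite Hc0. Qed.
Lemma Hc_0fun m : Hc F 0 m = fun _ => 0.
Proof. by apply: funext => y; rewrite H0m. Qed.

Lemma dv_Hc (x : xvar R) j m :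
  dv (fun s => Hc F j m (Defs.shift x 0 s)) (pd 1 (Hc F j m) x).
Proof.
have h := @iter_dv [:: j; m] x 0.
have h2 := dv_scal (- (m%:R)^-1) h.
have e : pd 1 (Hc F j m) x = - (m%:R)^-1 * pd 1 (iter_pd [:: j; m] F) x.
  by rewrite -(dv_val h2).
by rewrite e.
Qed.

Lemma pd_swap (x : xvar R) k n : pd k (u F n) x = pd 1 (Hc F k n) x.
Proof.
case: n => [|n].
  by rewrite /u pd_cst Hc_fun0 pd_cst.
case: k => [|k].
  by rewrite Hc_0fun pd_cst.
rewrite /u /Hc.
rewrite (@pd_scal k.+1 _ (pd 1 (pd n.+1 F))); last by move=> i'; exact: (hs.1 [:: 1%N; n.+1]).
rewrite (@pd_scal 1 _ (pd k.+1 (pd n.+1 F))); last by move=> i'; exact: (hs.1 [:: k.+1; n.+1]).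
by rewrite (hs.2 [:: n.+1] 1%N k.+1).
Qed.

End PD.
Section Cob.
Variable R : realType.
Variable F : xvar R -> R.
Hypothesis hs : smooth_F F.
Hypothesis hd : dKP F.
Variable x : xvar R.

Local Notation ys s := (Defs.shift x 0 s).

Program Definition Gs (i : nat) : lser R :=
  @LSer R 0 (fun t => match t with Negz m => pd 1 (Hc F i m.+1) x | Posz _ => 0 end) _.
Next Obligation. by move=> i [m|m]. Qed.

Lemma gext_co (G : nat -> lser R) a t :
  lco (gext G a) t = \sum_(j < size a) a`_j * lco (G j) t.
Proof.
have e : forall s, lco (foldr (fun i acc => ls_add (ls_scale a`_i (G i)) acc) (ls_zero R) s) t
   = \sum_(i <- s) a`_i * lco (G i) t.
  by elim => [|i s IH] /=; [rewrite big_nil | rewrite big_cons IH].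
rewrite /gext e (_ : iota 0 (size a) = index_iota 0 (size a)); last by rewrite /index_iota subn0.
by rewrite big_mkord.
Qed.

Lemma dcb j t : dv (fun s => cb F (ys s) j t) (lco (Gs j) t).
Proof.
case: t => m /=.
  by apply: dv_ext; [exact: (dv_add (dv_cst _) (dv_cst _)) | rewrite addr0].
by apply: dv_ext; [exact: (dv_add (dv_cst _) (dv_Hc hs x j m.+1)) | rewrite add0r].
Qed.

Lemma dser a t : dv (fun s => lco (ser F (ys s) a) t) (lco (gext Gs a) t).
Proof.
apply: (@dv_fext _ (fun s => \sum_(j < size a) a`_j * cb F (ys s) j t)).
  by move=> s; rewrite ser_co.
rewrite gext_co; apply: dv_sum => j; apply: dv_scal; exact: dcb.
Qed.

Lemma Gs_cbn l T K : lco (Gs l) (T%:Z - K%:Z) = pd 1 (Hc F l (K - T)) x.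
Proof.
case E : (T%:Z - K%:Z) => [m|m].
  have -> : lco (Gs l) (Posz m) = 0 by [].
  by rewrite (_ : (K - T = 0)%N) ?Hc_fun0 ?pd_cst //; lia.
have -> : lco (Gs l) (Negz m) = pd 1 (Hc F l m.+1) x by [].
by congr (pd 1 (Hc F l _) x); rewrite NegzE in E; lia.
Qed.

Lemma dcbn l T K : dv (fun s => cbn F (ys s) l T K) (pd 1 (Hc F l (K - T)) x).
Proof.
by apply: dv_ext; [exact: (dv_add (dv_cst _) (dv_Hc hs x l (K - T))) | rewrite add0r].
Qed.

Lemma psi_nth a b l : (psi F x a b)`_l =
  \sum_(j < size a) \sum_(k < size b) a`_j * b`_k * (psi_basis F x j k)`_l.
Proof.
rewrite /psi; case: (ltnP l (maxn (size a) (size b))) => h.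
  by rewrite nth_mkseq.
rewrite nth_default ?size_mkseq //.
symmetry; apply: big1 => j _; apply: big1 => k _.
rewrite [(psi_basis _ _ _ _)`_l]nth_default ?mulr0 // /psi_basis size_mkseq.
have := ltn_ord j; have := ltn_ord k; move: h; rewrite !geq_max; lia.
Qed.

Lemma dCc j k l : dv (fun s => Cc F (ys s) j k l) ((psi_basis F x j k)`_l).
Proof.
apply: dv_ext.
  exact: (dv_add (dv_add (dv_cst _) (dv_Hc hs x k (j - l))) (dv_Hc hs x j (k - l))).
rewrite add0r /psi_basis.
case: (ltnP l (maxn j k)) => h.
  by rewrite nth_mkseq // !(pd_swap hs).
rewrite nth_default ?size_mkseq //.
move: h; rewrite geq_max => /andP[h1 h2].
rewrite (_ : (j - l = 0)%N); last by lia.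
rewrite (_ : (k - l = 0)%N); last by lia.
by rewrite !Hc_fun0 !pd_cst addr0.
Qed.

Lemma dccs a b l : dv (fun s => ccs F (ys s) a b l) ((psi F x a b)`_l).
Proof.
rewrite psi_nth; apply: dv_sum => j; apply: dv_sum => k; apply: dv_scal; exact: dCc.
Qed.


Lemma mul_hi (f g : lser R) (T1 T2 t : int) :
 (forall n, T1 < n -> lco f n = 0) -> (forall n, T2 < n -> lco g n = 0) ->
 T1 + T2 < t -> lco (ls_mul f g) t = 0.
Proof.
move=> h1 h2 ht.
by rewrite (@mul_window _ f g T1 T2 t (t - T2) 0) ?big_ord0 //; lia.
Qed.

Lemma bndG a : forall n, 0 < n -> lco (gext Gs a) n = 0.
Proof.
move=> n hn; rewrite gext_co; apply: big1 => j _.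
by case: n hn => // m _; rewrite mulr0.
Qed.

Lemma cobnd a b ab : ser F x ab =~ ls_mul (ser F x a) (ser F x b) ->
  ser F x (psi F x a b) =~
    ls_add (ls_add (ls_mul (ser F x a) (gext Gs b))
                   (ls_mul (ser F x b) (gext Gs a)))
           (ls_opp (gext Gs ab)).
Proof.
move=> hab t.
rewrite !co_add co_opp.
have hab' : forall l, ab`_l = (cc F x a b)`_l.
  by move=> l; have := hab (Posz l); rewrite (ls_closure hd).
have hpsi : size (psi F x a b) = maxn (size a) (size b) by rewrite size_mkseq.
case: (lerP t (size a + size b)%N%:Z) => ht; last first.
  rewrite bndS; last by rewrite hpsi; lia.
  rewrite (@mul_hi _ _ (size a) 0) //; first last.
  - by lia.
  - by move=> n hn; apply: bndG.
  - exact: bndS.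
  rewrite (@mul_hi _ _ (size b) 0) //; first last.
  - by lia.
  - by move=> n hn; apply: bndG.
  - exact: bndS.
  rewrite bndG; last by lia.
  by rewrite addr0 subr0.
set T := (size a + size b)%N.
set K := absz (T%:Z - t)%R.
have eK : t = (size a)%:Z + (size b)%:Z - K%:Z by rewrite /K gez0_abs; lia.
have eT : t = T%:Z - K%:Z by rewrite eK /T PoszD.
have dPhi := dv_sum (fun i : 'I_K.+1 =>
   dv_mul (dser a ((size a)%:Z - i%:Z)) (dser b ((size b)%:Z - (K - i)%N%:Z))).
have dPsi := dv_sum (fun l : 'I_T.+1 =>
   dv_mul (dccs a b l) (dcbn l T K)).
have E := dv_uniq (dv_fext (fun s => closure_core hd (ys s) a b K) dPhi) dPsi.
rewrite shift0 !big_split /= in E.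
have e1 : \sum_(i < K.+1) lco (ser F x a) ((size a)%:Z - i%:Z) *
      lco (gext Gs b) ((size b)%:Z - (K - i)%N%:Z) = lco (ls_mul (ser F x a) (gext Gs b)) t.
  rewrite eK L_mul //; first exact: bndS.
  by move=> n hn; apply: bndG; lia.
have e2 : \sum_(i < K.+1) lco (ser F x b) ((size b)%:Z - (K - i)%N%:Z) *
      lco (gext Gs a) ((size a)%:Z - i%:Z) = lco (ls_mul (ser F x b) (gext Gs a)) t.
  rewrite ls_mulC eK L_mul //; last exact: bndS.
    by apply: eq_bigr => i _; rewrite mulrC.
  by move=> n hn; apply: bndG; lia.
have e3 : \sum_(l < T.+1) ccs F x a b l * pd 1 (Hc F l (K - T)) x = lco (gext Gs ab) t.
  rewrite gext_co eT.
  under [RHS]eq_bigr => j _ do rewrite Gs_cbn.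
  rewrite -(@sum_cut _ (size ab) (size ab + T.+1) (fun j => ab`_j * pd 1 (Hc F j (K - T)) x));
    first last.
  - by move=> l hl; rewrite nth_default ?mul0r.
  - by lia.
  under [RHS]eq_bigr => j _ do rewrite hab'.
  rewrite [RHS](@sum_cut _ T.+1 (size ab + T.+1) (fun j => (cc F x a b)`_j * pd 1 (Hc F j (K - T)) x));
    first last.
  - by move=> l hl; rewrite nth_default ?mul0r // size_mkseq.
  - by lia.
  by apply: eq_bigr => l _; rewrite nth_mkseq.
have e4 : \sum_(l < T.+1) cbn F x l T K * (psi F x a b)`_l = lco (ser F x (psi F x a b)) t.
  rewrite eT ser_con; last by rewrite hpsi /T; lia.
  rewrite (@sum_cut _ (size (psi F x a b)) T.+1 (fun l => cbn F x l T K * (psi F x a b)`_l));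
    first last.
  - by move=> l hl; rewrite nth_default ?mulr0.
  - by rewrite hpsi /T; lia.
  by apply: eq_bigr => l _; rewrite mulrC.
rewrite e1 e2 e3 e4 in E.
lra.
Qed.


Lemma cocycle a b c ab bc :
  ser F x ab =~ ls_mul (ser F x a) (ser F x b) ->
  ser F x bc =~ ls_mul (ser F x b) (ser F x c) ->
  ls_add (ls_add (ls_add
    (ls_mul (ser F x a) (ser F x (psi F x b c)))
    (ls_opp (ser F x (psi F x ab c))))
    (ser F x (psi F x a bc)))
    (ls_opp (ls_mul (ser F x c) (ser F x (psi F x a b))))
  =~ ls_zero R.
Proof.
move=> hab hbc t.
have h1 : ser F x (cc F x ab c) =~ ls_mul (ser F x ab) (ser F x c).
  exact: ls_eq_sym (ls_closure hd x ab c).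
have h2 : ser F x (cc F x ab c) =~ ls_mul (ser F x a) (ser F x bc).
  apply: (ls_eq_trans h1); apply: (ls_eq_trans (mul_congr hab (ls_eq_refl _))).
  apply: (ls_eq_trans (ls_mulA _ _ _)); apply: mul_congr => //; exact: ls_eq_sym.
have P1 := cobnd hbc.
have P2 := cobnd h1.
have P3 := cobnd h2.
have P4 := cobnd hab.
set Sa := ser F x a; set Sb := ser F x b; set Sc := ser F x c.
set Sab := ser F x ab; set Sbc := ser F x bc.
set Da := gext Gs a; set Db := gext Gs b; set Dc := gext Gs c.
set Dab := gext Gs ab; set Dbc := gext Gs bc; set Dabc := gext Gs (cc F x ab c).
have q1 : lco (ls_mul Sa (ser F x (psi F x b c))) t = lco (ls_mul Sa (ls_mul Sb Dc)) t
     + lco (ls_mul Sa (ls_mul Sc Db)) t - lco (ls_mul Sa Dbc) t.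
  by rewrite (mul_congr (ls_eq_refl _) P1 t) (mul_addr _ _ _ t) co_add (mul_addr _ _ _ t)
     co_add (mul_oppr _ _ t) co_opp.
have q4 : lco (ls_mul Sc (ser F x (psi F x a b))) t = lco (ls_mul Sc (ls_mul Sa Db)) t
     + lco (ls_mul Sc (ls_mul Sb Da)) t - lco (ls_mul Sc Dab) t.
  by rewrite (mul_congr (ls_eq_refl _) P4 t) (mul_addr _ _ _ t) co_add (mul_addr _ _ _ t)
     co_add (mul_oppr _ _ t) co_opp.
have q2 : lco (ser F x (psi F x ab c)) t = lco (ls_mul Sab Dc) t
     + lco (ls_mul Sc Dab) t - lco Dabc t.
  by rewrite (P2 t) !co_add co_opp.
have q3 : lco (ser F x (psi F x a bc)) t = lco (ls_mul Sa Dbc) t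
     + lco (ls_mul Sbc Da) t - lco Dabc t.
  by rewrite (P3 t) !co_add co_opp.
have r1 : lco (ls_mul Sab Dc) t = lco (ls_mul Sa (ls_mul Sb Dc)) t.
  by rewrite (mul_congr hab (ls_eq_refl _) t) (ls_mulA _ _ _ t).
have r2 : lco (ls_mul Sbc Da) t = lco (ls_mul Sc (ls_mul Sb Da)) t.
  rewrite (mul_congr hbc (ls_eq_refl _) t) (mul_congr (ls_mulC _ _) (ls_eq_refl _) t).
  by rewrite (ls_mulA _ _ _ t).
have r3 : lco (ls_mul Sa (ls_mul Sc Db)) t = lco (ls_mul Sc (ls_mul Sa Db)) t.
  rewrite -(ls_mulA _ _ _ t) (mul_congr (ls_mulC _ _) (ls_eq_refl _) t).
  by rewrite (ls_mulA _ _ _ t).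
rewrite !co_add !co_opp q1 q2 q3 q4 r1 r2 r3 /=.
lra.
Qed.

End Cob.

Unset Implicit Arguments.
Set Strict Implicit.

Theorem proposition4 (R : realType) (F : xvar R -> R) :
  smooth_F F -> dKP F ->
  forall x : xvar R,
    (forall a b c ab bc : seq R,
        ser F x ab =~ ls_mul (ser F x a) (ser F x b) ->
        ser F x bc =~ ls_mul (ser F x b) (ser F x c) ->
        ls_add (ls_add (ls_add
          (ls_mul (ser F x a) (ser F x (psi F x b c)))
          (ls_opp (ser F x (psi F x ab c))))
          (ser F x (psi F x a bc)))
          (ls_opp (ls_mul (ser F x c) (ser F x (psi F x a b))))
        =~ ls_zero R)
    /\
    (exists G : nat -> lser R,
        forall a b ab : seq R,
          ser F x ab =~ ls_mul (ser F x a) (ser F x b) ->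
          ser F x (psi F x a b)
          =~ ls_add (ls_add (ls_mul (ser F x a) (gext G b))
                            (ls_mul (ser F x b) (gext G a)))
                    (ls_opp (gext G ab))).
Proof.
move=> hs hd x; split.
  by move=> a b c ab bc hab hbc; apply: cocycle.
exists (Gs F x) => a b ab hab.
exact: cobnd.
Qed.
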